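(* Let $X$ and $Y$ be random variables with values in $\mathbb{N}=\{1,2,\dots\}$ whose probability mass functions are non-increasing on $\mathbb{N}$. If $X\le_{st}Y$ (i.e. $\Pr(X>t)\le\Pr(Y>t)$ for all $t\in\mathbb{R}$), then $X\le_{wd}Y$.
   Context: For a real random variable $X$, its Lévy concentration function is $Q_X(\varepsilon)=\sup_{x_0\in\mathbb{R}}\Pr\{X\in[x_0,x_0+\varepsilon]\}$, $\varepsilon>0$. For random variables $X,Y$, write $X\le_{wd}Y$ if $Q_X(\varepsilon)\ge Q_Y(\varepsilon)$ for all $\varepsilon>0$. *)

(* Defs.v *)
From HB Require Import structures.
From mathcomp Require Import all_boot all_order all_algebra.
From mathcomp Require Import all_classical all_reals all_analysis.
Set Implicit Arguments. Unset Strict Implicit. Unset Printing Implicit Defensive.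
Import Order.TTheory GRing.Theory Num.Theory.
Local Open Scope classical_set_scope.
Local Open Scope ring_scope.

Definition levy_conc (d : measure_display) (T : measurableType d) (R : realType)
  (P : probability T R) (X : {RV P >-> R}) (e : R) : \bar R :=
  ereal_sup [set P (X @^-1` `[x0, x0 + e]) | x0 in [set: R]].

Definition pmass (d : measure_display) (T : measurableType d) (R : realType)
  (P : probability T R) (X : {RV P >-> R}) (n : nat) : \bar R :=
  P (X @^-1` [set n%:R]).

(* Main.v *)
Require Import Defs.
From HB Require Import structures.
From mathcomp Require Import all_boot all_order all_algebra.
From mathcomp Require Import all_classical all_reals all_analysis.
From mathcomp Require Import lra.
Import Order.TTheory GRing.Theory Num.Theory.
Local Open Scope classical_set_scope.
Local Open Scope ring_scope.

Lemma shift_le (R : realType) (d : measure_display) (T : measurableType d)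
  (P : probability T R) (Y : {RV P >-> R})
  (hY : forall w, exists n : nat, (0 < n)%N /\ Y w = n%:R)
  (hm : forall n m : nat, (0 < n)%N -> (n <= m)%N ->
        (P (Y @^-1` [set m%:R]) <= P (Y @^-1` [set n%:R]))%E)
  (e x0 : R) : 0 < e -> 1 < x0 ->
  (P (Y @^-1` `[x0, (x0 + e)%R]) <= P (Y @^-1` `[(x0 - 1)%R, (x0 - 1 + e)%R]))%E.
Proof.
move=> e0 x01.
have mA : measurable (Y @^-1` `[x0, (x0 + e)%R]) by apply: measurable_funPTI.
have mB : measurable (Y @^-1` `[(x0 - 1)%R, (x0 - 1 + e)%R]) by apply: measurable_funPTI.
rewrite (measureDI P mA mB) (measureDI P mB mA) setIC.
apply: leeD2r.
have mAB := measurableD mA mB; have mBA := measurableD mB mA.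
case: (pselect (exists n : nat, x0 <= n%:R <= x0 + e /\ x0 - 1 + e < n%:R)).
  move=> [n [/andP[n1 n2] n3]].
  have n0 : (0 < n)%N by rewrite -(ltr0n R); lra.
  have sub1 : Y @^-1` `[x0, (x0 + e)%R] `\` Y @^-1` `[(x0 - 1)%R, (x0 - 1 + e)%R] `<=` Y @^-1` [set n%:R].
    move=> w /= []; case: (hY w) => n' [n'0 ->].
    rewrite !in_itv /= => /andP[a1 a2] /negP; rewrite negb_and -!ltNge => b.
    have {}b : x0 - 1 + e < n'%:R by case/orP: b; lra.
    apply/eqP; rewrite eqr_nat eqn_leq -ltnS -[(n <= n')%N]ltnS -!(ltr_nat R) -!natr1; apply/andP; split; lra.
  pose p := fun k : nat => x0 - 1 <= k%:R.
  have exk : exists k, p k.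
    exists n.-1; rewrite /p; have := n1; rewrite -{1}(prednK n0) -natr1; lra.
  case: (ex_minnP exk) => k pk kmin.
  have k0 : (0 < k)%N.
    rewrite lt0n; apply/negP => /eqP k0; move: pk; rewrite /p k0; lra.
  have kn : (k <= n.-1)%N.
    apply: kmin; rewrite /p; have := n1; rewrite -{1}(prednK n0) -natr1; lra.
  have klt : k.-1%:R < x0 - 1.
    rewrite ltNge; apply/negP => /kmin.
    by rewrite -{1}(prednK k0) ltnn.
  have sub2 : Y @^-1` [set k%:R] `<=` Y @^-1` `[(x0 - 1)%R, (x0 - 1 + e)%R] `\` Y @^-1` `[x0, (x0 + e)%R].
    move=> w /= ->; rewrite !in_itv /=; split.
      apply/andP; split; first exact: pk.
      have : k%:R <= n.-1%:R :> R by rewrite ler_nat.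
      have := n2; rewrite -{1}(prednK n0) -natr1; lra.
    move=> /andP[c1 _]; rewrite -(prednK k0) -natr1 in c1; lra.
  apply: (le_trans (le_measure _ _ _ sub1)); rewrite ?inE //.
  apply: (le_trans (hm k n k0 _)).
    by apply: (leq_trans kn); rewrite leq_pred.
  by apply: le_measure; rewrite ?inE //.
move=> nex.
have -> : Y @^-1` `[x0, (x0 + e)%R] `\` Y @^-1` `[(x0 - 1)%R, (x0 - 1 + e)%R] = set0.
  apply/seteqP; split => // w /= []; case: (hY w) => n' [n'0 ->].
  rewrite !in_itv /= => /andP[a1 a2] /negP; rewrite negb_and -!ltNge => b.
  exfalso; apply: nex; exists n'; split; first by rewrite a1 a2.
  by case/orP: b; lra.
by rewrite measure0.
Qed.

Lemma window_le (R : realType) (d : measure_display) (T : measurableType d)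
  (P : probability T R) (Y : {RV P >-> R})
  (hY : forall w, exists n : nat, (0 < n)%N /\ Y w = n%:R)
  (hm : forall n m : nat, (0 < n)%N -> (n <= m)%N ->
        (P (Y @^-1` [set m%:R]) <= P (Y @^-1` [set n%:R]))%E)
  (e : R) : 0 < e -> forall x0 : R,
  (P (Y @^-1` `[x0, (x0 + e)%R]) <= P (Y @^-1` `[1%R, (1 + e)%R]))%E.
Proof.
move=> e0.
suff H : forall N : nat, forall x0 : R, x0 <= N%:R + 1 ->
  (P (Y @^-1` `[x0, (x0 + e)%R]) <= P (Y @^-1` `[1%R, (1 + e)%R]))%E.
  move=> x0; apply: (H (Num.Def.archi_bound x0)).
  have := unstable.ltr_norm_bound x0; have := ler_norm x0; lra.
elim=> [|N IH] x0 hx0.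
  apply: le_measure; rewrite ?inE; try exact: measurable_funPTI.
  move=> w /=; case: (hY w) => n [n0 ->]; rewrite !in_itv /= => /andP[a1 a2].
  have : 1 <= n%:R :> R by rewrite ler1n.
  move: hx0; rewrite mulr0n add0r => hx0 h1.
  apply/andP; split; lra.
case: (lerP x0 (N%:R + 1)) => hx; first exact: IH.
apply: (le_trans (@shift_le _ _ _ P Y hY hm e x0 e0 _)).
  have : 0 <= N%:R :> R by rewrite ler0n.
  lra.
apply: IH; move: hx0; rewrite -natr1; lra.
Qed.

Lemma compl_eq (R : realType) (d : measure_display) (T : measurableType d)
  (P : probability T R) (Y : {RV P >-> R})
  (hY : forall w, exists n : nat, (0 < n)%N /\ Y w = n%:R) (e : R) :
  Y @^-1` `[1%R, (1 + e)%R] = ~` (Y @^-1` `](1 + e)%R, +oo[).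
Proof.
apply/seteqP; split => w /=; case: (hY w) => n [n0 ->]; rewrite !in_itv /= andbT.
  by move=> /andP[_ h]; rewrite ltNge h.
have : 1 <= n%:R :> R by rewrite ler1n.
move=> h1 h2; rewrite h1 /=; rewrite leNgt; exact/negP.
Qed.

Theorem proposition3p2 (R : realType)
  (d1 : measure_display) (T1 : measurableType d1) (P1 : probability T1 R)
  (d2 : measure_display) (T2 : measurableType d2) (P2 : probability T2 R)
  (X : {RV P1 >-> R}) (Y : {RV P2 >-> R}) :
  (forall w, exists n : nat, (0 < n)%N /\ X w = n%:R) ->
  (forall w, exists n : nat, (0 < n)%N /\ Y w = n%:R) ->
  (forall n m : nat, (0 < n)%N -> (n <= m)%N -> (pmass X m <= pmass X n)%E) ->
  (forall n m : nat, (0 < n)%N -> (n <= m)%N -> (pmass Y m <= pmass Y n)%E) ->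
  (forall t : R, (P1 (X @^-1` `]t, +oo[) <= P2 (Y @^-1` `]t, +oo[))%E) ->
  forall e : R, 0 < e -> (levy_conc Y e <= levy_conc X e)%E.
Proof.
move=> hX hY hmX hmY hst e e0.
rewrite /levy_conc; apply/ereal_supP => _ [x0 _ <-].
apply: (le_trans (@window_le _ _ _ P2 Y hY hmY e e0 x0)).
have H : (P2 (Y @^-1` `[1%R, (1 + e)%R]) <= P1 (X @^-1` `[1%R, (1 + e)%R]))%E.
  rewrite (@compl_eq _ _ _ P1 X hX) (@compl_eq _ _ _ P2 Y hY) !probability_setC; last 2 first.
  - exact: measurable_funPTI.
  - exact: measurable_funPTI.
  exact: leeB (lexx _) (hst _).
apply: (le_trans H); apply: ereal_sup_ubound; by exists 1.
Qed.
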